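(* If $\mathrm{char}(\Bbbk)=3$, then $P$ is minimally generated by $h_1=yz-x^3-y^6z^2+xy^4z^3$, $h_2=z^3+xy^3+x^2yz-y^5z^4$ and $h_3=y^4+xy^2z+x^2z^2-y^4z^5$; in particular $\mu(P)=3$.
   Context: $\Bbbk$ is a field. $\rho:\Bbbk[[x,y,z]]\to\Bbbk[[t]]$ is the $\Bbbk$-algebra morphism with $\rho(x)=t^6+t^{31}$, $\rho(y)=t^8$, $\rho(z)=t^{10}$, and $P=\ker\rho$. $\mu(P)$ is the minimal number of generators of $P$. *)

(* Defs.v *)
From HB Require Import structures.
From mathcomp Require Import all_boot all_order all_algebra.
Set Implicit Arguments. Unset Strict Implicit. Unset Printing Implicit Defensive.
Import Order.TTheory GRing.Theory Num.Theory.
Local Open Scope ring_scope.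

(* K[[x,y,z]] : f a b c is the coefficient of x^a y^b z^c *)
Definition ps3 (K : fieldType) := nat -> nat -> nat -> K.
(* K[[t]] : s n is the coefficient of t^n *)
Definition ps1 (K : fieldType) := nat -> K.

Definition ps3add (K : fieldType) (f g : ps3 K) : ps3 K :=
  fun a b c => f a b c + g a b c.
Definition ps3mul (K : fieldType) (f g : ps3 K) : ps3 K :=
  fun a b c => \sum_(i < a.+1) \sum_(j < b.+1) \sum_(l < c.+1)
                 f i j l * g (a - i)%N (b - j)%N (c - l)%N.
Definition mono3 (K : fieldType) (cm : K) (a b c : nat) : ps3 K :=
  fun i j l => if [&& i == a, j == b & l == c] then cm else 0.

Definition ps1add (K : fieldType) (s u : ps1 K) : ps1 K := fun n => s n + u n.
Definition ps1mul (K : fieldType) (s u : ps1 K) : ps1 K :=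
  fun n => \sum_(i < n.+1) s i * u (n - i)%N.
Definition ps1one (K : fieldType) : ps1 K := fun n => if n == 0%N then 1 else 0.
Definition ps1pow (K : fieldType) (s : ps1 K) (m : nat) : ps1 K :=
  iter m (ps1mul s) (@ps1one K).
Definition tpow (K : fieldType) (m : nat) : ps1 K := fun n => if n == m then 1 else 0.

Definition rho_x (K : fieldType) : ps1 K := ps1add (tpow K 6) (tpow K 31).
Definition rho_y (K : fieldType) : ps1 K := tpow K 8.
Definition rho_z (K : fieldType) : ps1 K := tpow K 10.

(* rho : K[[x,y,z]] -> K[[t]], the K-algebra morphism x |-> t^6+t^31,
   y |-> t^8, z |-> t^10, i.e. rho f = sum_{a,b,c} f_{abc} rho_x^a rho_y^b rho_z^c.
   Since rho_x^a rho_y^b rho_z^c has t-order 6a+8b+10c, only the terms with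
   a,b,c <= n contribute to the coefficient of t^n. *)
Definition rho (K : fieldType) (f : ps3 K) : ps1 K :=
  fun n => \sum_(a < n.+1) \sum_(b < n.+1) \sum_(c < n.+1)
    f a b c * ps1mul (ps1mul (ps1pow (rho_x K) a) (ps1pow (rho_y K) b))
                     (ps1pow (rho_z K) c) n.

Definition inP (K : fieldType) (f : ps3 K) : Prop := forall n, rho f n = 0.

Definition h1 (K : fieldType) : ps3 K :=
  ps3add (ps3add (ps3add (mono3 1 0 1 1) (mono3 (-1) 3 0 0))
                 (mono3 (-1) 0 6 2)) (mono3 1 1 4 3).
Definition h2 (K : fieldType) : ps3 K :=
  ps3add (ps3add (ps3add (mono3 1 0 0 3) (mono3 1 1 3 0))
                 (mono3 1 2 1 1)) (mono3 (-1) 0 5 4).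
Definition h3 (K : fieldType) : ps3 K :=
  ps3add (ps3add (ps3add (mono3 1 0 4 0) (mono3 1 1 2 1))
                 (mono3 1 2 0 2)) (mono3 (-1) 0 4 5).

(* Main.v *)
Require Import Defs.
From HB Require Import structures.
From mathcomp Require Import all_boot all_order all_algebra.
From mathcomp Require Import boolp.
From mathcomp Require Import ring lra zify.
From Stdlib Require Import FunctionalExtensionality.
Set Implicit Arguments. Unset Strict Implicit. Unset Printing Implicit Defensive.
Import GRing.Theory.
Local Open Scope ring_scope.


Definition toF (K : fieldType) (p : {poly {poly {poly K}}}) : ps3 K :=
  fun a b c => p`_a`_b`_c.
Definition trunc (K : fieldType) (N : nat) (f : ps3 K) : {poly {poly {poly K}}} :=
  \poly_(a < N.+1) \poly_(b < N.+1) \poly_(c < N.+1) f a b c.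
Definition ps3zero (K : fieldType) : ps3 K := fun _ _ _ => 0.
Definition ps3opp (K : fieldType) (f : ps3 K) : ps3 K := fun a b c => - f a b c.
Definition ps3one (K : fieldType) : ps3 K := mono3 1 0 0 0.

Section PS.
Variable K : fieldType.
Local Notation ps3 := (ps3 K).
Local Notation PP := {poly {poly {poly K}}}.

Lemma ps3_ext (f g : ps3) : (forall a b c, f a b c = g a b c) -> f = g.
Proof. move=> H; do 3 (apply: functional_extensionality => ?); exact: H. Qed.

Lemma toF_mul (p q : PP) : toF (p * q) = ps3mul (toF p) (toF q).
Proof.
apply: ps3_ext => a b c; rewrite /toF /ps3mul coefM !coef_sum.
apply: eq_bigr => i _; rewrite coefM !coef_sum; apply: eq_bigr => j _.
by rewrite coefM.
Qed.

Lemma toF_add (p q : PP) : toF (p + q) = ps3add (toF p) (toF q).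
Proof. by apply: ps3_ext => a b c; rewrite /toF /ps3add !coefD. Qed.

Lemma toF_trunc N (f : ps3) a b c : (a <= N)%N -> (b <= N)%N -> (c <= N)%N ->
  toF (trunc N f) a b c = f a b c.
Proof. by move=> ha hb hc; rewrite /toF /trunc coef_poly ltnS ha coef_poly ltnS hb coef_poly ltnS hc. Qed.

Lemma mul_box (f g f' g' : ps3) a b c :
  (forall i j l, (i <= a)%N -> (j <= b)%N -> (l <= c)%N ->
     f i j l = f' i j l /\ g i j l = g' i j l) ->
  ps3mul f g a b c = ps3mul f' g' a b c.
Proof.
move=> H; rewrite /ps3mul; apply: eq_bigr => [[i hi]] _;
apply: eq_bigr => [[j hj]] _; apply: eq_bigr => [[l hl]] _ /=.
have [-> _] := H i j l hi hj hl.
by have [_ ->] := H (a - i)%N (b - j)%N (c - l)%N (leq_subr _ _) (leq_subr _ _) (leq_subr _ _).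
Qed.

Lemma mul_trunc (f g : ps3) a b c : ps3mul f g a b c =
  toF (trunc (maxn a (maxn b c)) f * trunc (maxn a (maxn b c)) g) a b c.
Proof.
rewrite toF_mul; apply: mul_box => i j l hi hj hl.
have h1 : (i <= maxn a (maxn b c))%N by lia.
have h2 : (j <= maxn a (maxn b c))%N by lia.
have h3 : (l <= maxn a (maxn b c))%N by lia.
by rewrite !toF_trunc.
Qed.

Lemma ps3mulC (f g : ps3) : ps3mul f g = ps3mul g f.
Proof. by apply: ps3_ext => a b c; rewrite !mul_trunc mulrC. Qed.

Lemma ps3mulA (f g h : ps3) : ps3mul f (ps3mul g h) = ps3mul (ps3mul f g) h.
Proof.
apply: ps3_ext => a b c; set N := maxn a (maxn b c).
transitivity (toF (trunc N f * (trunc N g * trunc N h)) a b c).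
  rewrite toF_mul; apply: mul_box => i j l hi hj hl.
  have h1 : (i <= N)%N by lia. have h2 : (j <= N)%N by lia. have h3 : (l <= N)%N by lia.
  split; first by rewrite toF_trunc.
  rewrite toF_mul; apply: mul_box => i' j' l' hi' hj' hl'.
  have h1' : (i' <= N)%N by lia. have h2' : (j' <= N)%N by lia. have h3' : (l' <= N)%N by lia.
  by rewrite !toF_trunc.
rewrite mulrA.
rewrite toF_mul; apply: mul_box => i j l hi hj hl.
have h1 : (i <= N)%N by lia. have h2 : (j <= N)%N by lia. have h3 : (l <= N)%N by lia.
split; last by rewrite toF_trunc.
rewrite toF_mul; apply: mul_box => i' j' l' hi' hj' hl'.
have h1' : (i' <= N)%N by lia. have h2' : (j' <= N)%N by lia. have h3' : (l' <= N)%N by lia.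
by rewrite !toF_trunc.
Qed.

Lemma ps3mulDl (f g h : ps3) : ps3mul (ps3add f g) h = ps3add (ps3mul f h) (ps3mul g h).
Proof.
apply: ps3_ext => a b c; rewrite /ps3mul /ps3add -!big_split /=.
apply: eq_bigr => i _; rewrite -!big_split; apply: eq_bigr => j _.
rewrite -!big_split; apply: eq_bigr => l _; by rewrite mulrDl.
Qed.

Lemma sum_delta (m k : nat) (F : 'I_m.+1 -> K) :
  \sum_(i < m.+1) (if (i : nat) == k then F i else 0) = if (k < m.+1)%N then F (inord k) else 0.
Proof.
case: ltnP => h.
  rewrite (bigD1 (inord k)) /= ?inordK ?eqxx // big1 ?addr0 // => i /negbTE hi.
  case: eqP => // e; move: hi; suff -> : i = inord k by rewrite eqxx.
  by apply: val_inj; rewrite /= inordK.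
rewrite big1 // => i _; case: eqP => // e; move: (ltn_ord i); rewrite e; lia.
Qed.

Lemma sum_if (n : nat) (P : bool) (F : 'I_n -> K) :
  \sum_(i < n) (if P then F i else 0) = if P then \sum_(i < n) F i else 0.
Proof. by case: P => //; rewrite big1. Qed.

Lemma mono_mul cm i0 j0 l0 (f : ps3) a b c :
  ps3mul (mono3 cm i0 j0 l0) f a b c =
  if [&& (i0 <= a)%N, (j0 <= b)%N & (l0 <= c)%N] then cm * f (a - i0)%N (b - j0)%N (c - l0)%N else 0.
Proof.
rewrite /ps3mul /mono3.
have E : forall (i j l : nat) (X : K), (if [&& i == i0, j == j0 & l == l0] then cm else 0) * X =
   if i == i0 then (if j == j0 then (if l == l0 then cm * X else 0) else 0) else 0.
  by move=> i j l X; case: eqP; case: eqP; case: eqP; rewrite /= ?mul0r.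
under eq_bigr => i _ do under eq_bigr => j _ do under eq_bigr => l _ do rewrite E.
under eq_bigr => i _ do under eq_bigr => j _ do rewrite sum_if.
under eq_bigr => i _ do rewrite sum_if.
rewrite sum_delta; case: ltnP => ha /=; last by rewrite (leqNgt i0 a) ha.
rewrite (inordK ha). under eq_bigr => j _ do rewrite sum_if. rewrite sum_delta; case: ltnP => hb /=; last by rewrite (leqNgt j0 b) hb andbF.
rewrite sum_delta; case: ltnP => hc /=; last by rewrite (leqNgt l0 c) hc !andbF.
by rewrite (inordK hb) (inordK hc); rewrite ltnS in ha; rewrite ltnS in hb; rewrite ltnS in hc; rewrite ha hb hc.
Qed.

Lemma ps3addA (f g h : ps3) : ps3add f (ps3add g h) = ps3add (ps3add f g) h.
Proof. by apply: ps3_ext => a b c; rewrite /ps3add addrA. Qed.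
Lemma ps3addC (f g : ps3) : ps3add f g = ps3add g f.
Proof. by apply: ps3_ext => a b c; rewrite /ps3add addrC. Qed.
Lemma ps3add0 (f : ps3) : ps3add (ps3zero K) f = f.
Proof. by apply: ps3_ext => a b c; rewrite /ps3add /ps3zero add0r. Qed.
Lemma ps3addN (f : ps3) : ps3add (ps3opp f) f = ps3zero K.
Proof. by apply: ps3_ext => a b c; rewrite /ps3add /ps3zero /ps3opp addNr. Qed.
Lemma ps3mul1 (f : ps3) : ps3mul (ps3one K) f = f.
Proof. by apply: ps3_ext => a b c; rewrite /ps3one mono_mul /= mul1r !subn0. Qed.
Lemma ps3one_neq0 : ps3one K <> ps3zero K.
Proof.
move=> H; have := congr1 (fun f : ps3 => f 0%N 0%N 0%N) H.
by rewrite /ps3one /mono3 /ps3zero /=; apply/eqP; rewrite oner_eq0.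
Qed.
End PS.

Definition R3 (K : fieldType) := ps3 K.
HB.instance Definition _ (K : fieldType) := gen_eqMixin (R3 K).
HB.instance Definition _ (K : fieldType) := gen_choiceMixin (R3 K).
HB.instance Definition _ (K : fieldType) := GRing.isZmodule.Build (R3 K)
  (@ps3addA K) (@ps3addC K) (@ps3add0 K) (@ps3addN K).
Lemma ps3one_neq0b (K : fieldType) : (ps3one K : R3 K) != ps3zero K.
Proof. by apply/eqP; apply: ps3one_neq0. Qed.
HB.instance Definition _ (K : fieldType) := GRing.Zmodule_isComNzRing.Build (R3 K)
  (@ps3mulA K) (@ps3mulC K) (@ps3mul1 K) (@ps3mulDl K) (@ps3one_neq0b K).

Section Test.
Variable K : fieldType.
Lemma ps3addE (f g : ps3 K) : ps3add f g = (f : R3 K) + g. Proof. by []. Qed.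
Lemma ps3mulE (f g : ps3 K) : ps3mul f g = (f : R3 K) * g. Proof. by []. Qed.
End Test.


Definition toF1 (K : fieldType) (p : {poly K}) : ps1 K := fun n => p`_n.
Definition PX (K : fieldType) : {poly K} := 'X^6 + 'X^31.
Definition PY (K : fieldType) : {poly K} := 'X^8.
Definition PZ (K : fieldType) : {poly K} := 'X^10.

Section Rho.
Variable K : fieldType.
Local Notation ps3 := (ps3 K).
Local Notation PP := {poly {poly {poly K}}}.

Lemma ps1_ext (s u : ps1 K) : (forall n, s n = u n) -> s = u.
Proof. move=> H; apply: functional_extensionality => ?; exact: H. Qed.

Lemma toF1_mul (p q : {poly K}) : ps1mul (toF1 p) (toF1 q) = toF1 (p * q).
Proof. by apply: ps1_ext => n; rewrite /toF1 /ps1mul coefM. Qed.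

Lemma toF1_add (p q : {poly K}) : ps1add (toF1 p) (toF1 q) = toF1 (p + q).
Proof. by apply: ps1_ext => n; rewrite /toF1 /ps1add coefD. Qed.

Lemma toF1_one : ps1one K = toF1 1.
Proof. by apply: ps1_ext => n; rewrite /toF1 /ps1one coef1; case: eqP. Qed.

Lemma toF1_tpow m : tpow K m = toF1 'X^m.
Proof. by apply: ps1_ext => n; rewrite /toF1 /tpow coefXn; case: eqP. Qed.

Lemma toF1_pow (p : {poly K}) k : ps1pow (toF1 p) k = toF1 (p ^+ k).
Proof.
elim: k => [|k IH]; first by rewrite /ps1pow /= toF1_one expr0.
by rewrite /ps1pow iterS -/(ps1pow _ _) IH toF1_mul exprS.
Qed.

Lemma rhox_E : rho_x K = toF1 (PX K).
Proof. by rewrite /rho_x !toF1_tpow toF1_add. Qed.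
Lemma rhoy_E : rho_y K = toF1 (PY K).
Proof. by rewrite /rho_y !toF1_tpow. Qed.
Lemma rhoz_E : rho_z K = toF1 (PZ K).
Proof. by rewrite /rho_z !toF1_tpow. Qed.

Lemma rhoE0 (f : ps3) n : rho f n = \sum_(a < n.+1) \sum_(b < n.+1) \sum_(c < n.+1)
   f a b c * (PX K ^+ a * PY K ^+ b * PZ K ^+ c)`_n.
Proof.
rewrite /rho; apply: eq_bigr => a _; apply: eq_bigr => b _; apply: eq_bigr => c _.
by rewrite rhox_E rhoy_E rhoz_E !toF1_pow !toF1_mul.
Qed.

Lemma order_mon (a b c n : nat) : (n < a + b + c)%N ->
  (PX K ^+ a * PY K ^+ b * PZ K ^+ c)`_n = 0.
Proof.
move=> h.
have -> : PX K ^+ a * PY K ^+ b * PZ K ^+ c =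
   'X^(a + b + c) * (('X^5 + 'X^30) ^+ a * 'X^7 ^+ b * 'X^9 ^+ c).
  rewrite /PX /PY /PZ.
  have -> : ('X^6 + 'X^31 : {poly K}) = 'X * ('X^5 + 'X^30) by ring.
  have -> : ('X^8 : {poly K}) = 'X * 'X^7 by ring.
  have -> : ('X^10 : {poly K}) = 'X * 'X^9 by ring.
  rewrite !exprMn !exprD; ring.
by rewrite coefXnM h.
Qed.


Lemma cf2 : commr_rmorph (comp_poly (PZ K)) (PY K).
Proof. by move=> x; rewrite /GRing.comm mulrC. Qed.
Local Notation ev2 := (horner_morph cf2).
Lemma cf3 : commr_rmorph ev2 (PX K).
Proof. by move=> x; rewrite /GRing.comm mulrC. Qed.
Local Notation ev3 := (horner_morph cf3).

Lemma widen_sum (n m : nat) (F : nat -> K) : (n <= m)%N ->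
  (forall i, (n <= i)%N -> (i < m)%N -> F i = 0) ->
  \sum_(i < m) F i = \sum_(i < n) F i.
Proof.
move=> le H; rewrite -(big_mkord xpredT F) -(big_mkord xpredT F).
rewrite (big_cat_nat (leq0n n) le) /= [X in _ + X]big1_seq ?addr0 // => i.
rewrite /= mem_index_iota => /andP [h1 h2]; exact: H.
Qed.

Lemma ev3_trunc N (f : ps3) : ev3 (trunc N f) =
  \sum_(a < N.+1) \sum_(b < N.+1) \sum_(c < N.+1)
     (f a b c)%:P * (PX K ^+ a * PY K ^+ b * PZ K ^+ c).
Proof.
rewrite /trunc poly_def rmorph_sum /=; apply: eq_bigr => a _.
rewrite -mul_polyC rmorphM /= horner_morphC rmorphXn /= horner_morphX.
rewrite poly_def rmorph_sum mulr_suml /=; apply: eq_bigr => b _.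
rewrite -mul_polyC rmorphM /= horner_morphC rmorphXn /= horner_morphX.
rewrite poly_def rmorph_sum !mulr_suml /=; apply: eq_bigr => c _.
rewrite -mul_polyC rmorphM /= comp_polyC rmorphXn /= comp_polyX.
ring.
Qed.

Lemma widen3 n N (F : nat -> nat -> nat -> K) : (n <= N)%N ->
  (forall a b c, (n < a)%N \/ (n < b)%N \/ (n < c)%N -> F a b c = 0) ->
  \sum_(a < N.+1) \sum_(b < N.+1) \sum_(c < N.+1) F a b c =
  \sum_(a < n.+1) \sum_(b < n.+1) \sum_(c < n.+1) F a b c.
Proof.
move=> le H.
rewrite (@widen_sum n.+1 N.+1 (fun a => \sum_(b < N.+1) \sum_(c < N.+1) F a b c)) //; last first.
  by move=> a h1 _; rewrite big1 // => b _; rewrite big1 // => c _; apply: H; left.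
apply: eq_bigr => a _.
rewrite (@widen_sum n.+1 N.+1 (fun b => \sum_(c < N.+1) F a b c)) //; last first.
  by move=> b h1 _; rewrite big1 // => c _; apply: H; right; left.
apply: eq_bigr => b _.
rewrite (@widen_sum n.+1 N.+1 (fun c => F a b c)) // => c h1 _; by apply: H; right; right.
Qed.

Lemma rhoE N (f : ps3) n : (n <= N)%N -> rho f n = (ev3 (trunc N f))`_n.
Proof.
move=> hn; rewrite ev3_trunc rhoE0 coef_sum.
symmetry. under eq_bigr => a _ do rewrite coef_sum.
under eq_bigr => a _ do under eq_bigr => b _ do rewrite coef_sum.
under eq_bigr => a _ do under eq_bigr => b _ do under eq_bigr => c _ do rewrite coefCM.
rewrite (@widen3 n N (fun a b c => f a b c * (PX K ^+ a * PY K ^+ b * PZ K ^+ c)`_n)) //.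
move=> a b c H; rewrite order_mon ?mulr0 //; lia.
Qed.

Lemma toF_trunc_out N (f : ps3) a b c : (N < a)%N \/ (N < b)%N \/ (N < c)%N ->
  toF (trunc N f) a b c = 0.
Proof.
move=> H; rewrite /toF /trunc coef_poly ltnS; case: (leqP a N) => ha /=; last by rewrite !coef0.
rewrite coef_poly ltnS; case: (leqP b N) => hb /=; last by rewrite !coef0.
rewrite coef_poly ltnS; case: (leqP c N) => hc //=; lia.
Qed.

Lemma trunc_toF N (P : PP) :
  (forall a b c, (N < a)%N \/ (N < b)%N \/ (N < c)%N -> toF P a b c = 0) -> trunc N (toF P) = P.
Proof.
move=> H; apply/polyP => a; rewrite coef_poly ltnS; case: (leqP a N) => ha.
  apply/polyP => b; rewrite coef_poly ltnS; case: (leqP b N) => hb.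
    apply/polyP => c; rewrite coef_poly ltnS; case: (leqP c N) => hc //.
    by rewrite -[RHS]/(toF P a b c) H //; right; right.
  apply/polyP => c; rewrite coef0 -[RHS]/(toF P a b c) H //; right; left; exact: hb.
apply/polyP => b; apply/polyP => c; rewrite !coef0 -[RHS]/(toF P a b c) H //; left; exact: ha.
Qed.

Lemma rho_box (f f' : ps3) n : (forall a b c, (a <= n)%N -> (b <= n)%N -> (c <= n)%N ->
  f a b c = f' a b c) -> rho f n = rho f' n.
Proof.
move=> H; rewrite /rho; apply: eq_bigr => a _; apply: eq_bigr => b _; apply: eq_bigr => c _.
by rewrite H // -ltnS.
Qed.

Lemma rhoD (f g : ps3) : rho (ps3add f g) = ps1add (rho f) (rho g).
Proof.
apply: ps1_ext => n; rewrite /rho /ps1add -big_split; apply: eq_bigr => a _.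
rewrite -big_split; apply: eq_bigr => b _; rewrite -big_split; apply: eq_bigr => c _.
by rewrite /ps3add mulrDl.
Qed.

Lemma rhoM (f g : ps3) : rho (ps3mul f g) = ps1mul (rho f) (rho g).
Proof.
apply: ps1_ext => n.
set Tf := trunc n f; set Tg := trunc n g.
have E1 : rho (ps3mul f g) n = rho (toF (Tf * Tg)) n.
  apply: rho_box => a b c ha hb hc; rewrite toF_mul; apply: mul_box => i j l hi hj hl.
  by rewrite !toF_trunc //; lia.
have E2 : trunc (n + n) (toF (Tf * Tg)) = Tf * Tg.
  apply: trunc_toF => a b c H; rewrite toF_mul /ps3mul.
  apply: big1 => [[i hi]] _; apply: big1 => [[j hj]] _; apply: big1 => [[l hl]] _ /=.
  have [H1|H1] : ((n < i)%N \/ (n < j)%N \/ (n < l)%N) \/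
    ((n < a - i)%N \/ (n < b - j)%N \/ (n < c - l)%N) by lia.
    by rewrite toF_trunc_out ?mul0r.
  by rewrite [X in _ * X]toF_trunc_out ?mulr0.
rewrite E1 (@rhoE (n + n)) ?leq_addr // E2 rmorphM coefM /ps1mul.
apply: eq_bigr => i _.
have hi : (i <= n)%N by rewrite -ltnS.
by rewrite (@rhoE n f i hi) (@rhoE n g (n - i)%N (leq_subr _ _)).
Qed.
End Rho.


Section Rho2.
Variable K : fieldType.
Local Notation ps3 := (ps3 K).

Lemma sum3_mono m cm a0 b0 c0 (E : nat -> nat -> nat -> K) :
  \sum_(a < m.+1) \sum_(b < m.+1) \sum_(c < m.+1) mono3 cm a0 b0 c0 a b c * E a b c =
  if [&& (a0 <= m)%N, (b0 <= m)%N & (c0 <= m)%N] then cm * E a0 b0 c0 else 0.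
Proof.
rewrite /mono3.
have H : forall (i j l : nat) (X : K), (if [&& i == a0, j == b0 & l == c0] then cm else 0) * X =
   if i == a0 then (if j == b0 then (if l == c0 then cm * X else 0) else 0) else 0.
  by move=> i j l X; case: eqP; case: eqP; case: eqP; rewrite /= ?mul0r.
under eq_bigr => i _ do under eq_bigr => j _ do under eq_bigr => l _ do rewrite H.
under eq_bigr => i _ do under eq_bigr => j _ do rewrite sum_if.
under eq_bigr => i _ do rewrite sum_if.
rewrite sum_delta; case: ltnP => ha /=; last by rewrite (leqNgt a0 m) ha.
rewrite (inordK ha). under eq_bigr => j _ do rewrite sum_if.
rewrite sum_delta; case: ltnP => hb /=; last by rewrite (leqNgt b0 m) hb andbF.
rewrite sum_delta; case: ltnP => hc /=; last by rewrite (leqNgt c0 m) hc !andbF.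
rewrite (inordK hb) (inordK hc); rewrite ltnS in ha; rewrite ltnS in hb; rewrite ltnS in hc.
by rewrite ha hb hc.
Qed.

Lemma rho_mono cm a0 b0 c0 :
  rho (mono3 cm a0 b0 c0) = toF1 (cm *: (PX K ^+ a0 * PY K ^+ b0 * PZ K ^+ c0)).
Proof.
apply: ps1_ext => n; rewrite rhoE0 (sum3_mono _ _ _ _ _ (fun a b c => (PX K ^+ a * PY K ^+ b * PZ K ^+ c)`_n)) /toF1 coefZ.
case: ifP => // /negbT H; rewrite order_mon ?mulr0 //.
move: H; rewrite !negb_and -!ltnNge => /orP [h|/orP [h|h]]; lia.
Qed.

Lemma char3 (hchar : 3%N \in [pchar K]) : (3%:R : {poly K}) = 0.
Proof. by rewrite -polyC_natr (pcharf0 hchar). Qed.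

Lemma rho_h1 (hchar : 3%N \in [pchar K]) : rho (h1 K) = toF1 0.
Proof.
rewrite /h1 !rhoD !rho_mono !toF1_add !scaleN1r !scale1r; congr toF1.
rewrite /PX /PY /PZ.
rewrite [LHS](_ : _ = 3%:R * (- ('X^43 + 'X^68))); first by rewrite char3 // mul0r.
ring.
Qed.

Lemma rho_h2 (hchar : 3%N \in [pchar K]) : rho (h2 K) = toF1 0.
Proof.
rewrite /h2 !rhoD !rho_mono !toF1_add !scaleN1r !scale1r; congr toF1.
rewrite /PX /PY /PZ.
rewrite [LHS](_ : _ = 3%:R * ('X^30 + 'X^55)); first by rewrite char3 // mul0r.
ring.
Qed.

Lemma rho_h3 (hchar : 3%N \in [pchar K]) : rho (h3 K) = toF1 0.
Proof.
rewrite /h3 !rhoD !rho_mono !toF1_add !scaleN1r !scale1r; congr toF1.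
rewrite /PX /PY /PZ.
rewrite [LHS](_ : _ = 3%:R * ('X^32 + 'X^57)); first by rewrite char3 // mul0r.
ring.
Qed.

End Rho2.


Section Div.
Variable K : fieldType.
Local Notation R := (R3 K).

Lemma addE (f g : R) a b c : (f + g) a b c = f a b c + g a b c. Proof. by []. Qed.
Lemma oppE (f : R) a b c : (- f) a b c = - f a b c. Proof. by []. Qed.
Lemma subE (f g : R) a b c : (f - g) a b c = f a b c - g a b c. Proof. by []. Qed.
Lemma mulE (f g : R) a b c : (f * g) a b c = ps3mul f g a b c. Proof. by []. Qed.
Lemma zeroE a b c : (0 : R) a b c = 0. Proof. by []. Qed.
Lemma R_ext (f g : R) : (forall a b c, f a b c = g a b c) -> f = g.
Proof. exact: ps3_ext. Qed.

Definition mo (c : K) a b d : R := mono3 c a b d.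

Lemma mono_neg c a b d : mo (- c) a b d = - mo c a b d.
Proof. by apply: R_ext => i j l; rewrite oppE /mo /mono3; case: ifP; rewrite ?oppr0. Qed.

Lemma mono_mono c a b d c' a' b' d' :
  mo c a b d * mo c' a' b' d' = mo (c * c') (a + a') (b + b') (d + d').
Proof.
apply: R_ext => i j l; rewrite mulE /mo mono_mul /mono3.
have E : forall x y z : nat, (x <= y)%N && ((y - x)%N == z) = (y == (x + z)%N).
  move=> x y z; case: (leqP x y) => h /=.
    by apply/eqP/eqP; lia.
  by apply/esym/eqP; lia.
rewrite -E -(E b j b') -(E d l d').
case: (a <= i)%N; case: (b <= j)%N; case: (d <= l)%N => //=;
  rewrite ?andbF //; by case: ifP => _; rewrite ?mulr0.
Qed.


Lemma mo_mul c a b d (f : R) i j l : (mo c a b d * f) i j l =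
  if [&& (a <= i)%N, (b <= j)%N & (d <= l)%N] then c * f (i - a)%N (j - b)%N (l - d)%N else 0.
Proof. by rewrite mulE mono_mul. Qed.

Definition shiftY (f : R) : R := fun a b c => f a b.+1 c.
Definition y0 (f : R) : R := fun a b c => if b == 0%N then f a 0%N c else 0.
Definition Q1 (f : R) : R := fun a b c => if b == 0%N then f (a + 3)%N 0%N c else 0.
Definition Q2 (f : R) : R := fun a b c => if (b == 0%N) && (a < 3)%N then f a 0%N (c + 3)%N else 0.
Definition Q3 (f : R) : R := fun a b c => if [&& a == 0%N, b == 0%N & c == 0%N] then f 2%N 0%N 2%N else 0.
Definition Rm (f : R) : R := fun a b c =>
  if [&& b == 0%N, (a < 3)%N, (c < 3)%N & ~~ ((a == 2%N) && (c == 2%N))] then f a 0%N c else 0.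

Lemma split_y (f : R) : f = y0 f + mo 1 0 1 0 * shiftY f.
Proof.
apply: R_ext => a b c; rewrite addE mo_mul /y0 /shiftY.
case: b => [|b] /=; first by rewrite addr0.
by rewrite !subn0 mul1r add0r subn1.
Qed.

Lemma slice (f : R) : y0 f = mo 1 3 0 0 * Q1 f + mo 1 0 0 3 * Q2 f + mo 1 2 0 2 * Q3 f + Rm f.
Proof.
apply: R_ext => a b c; rewrite !addE !mo_mul /y0 /Q1 /Q2 /Q3 /Rm !subn0 !mul1r.
case: b => [|b] /=; last by rewrite andbF /= !if_same !addr0.
rewrite !andbT.
case: (ltnP a 3) => ha.
  case: (ltnP c 3) => hc.
    move: ha hc; case: a => [|[|[|a]]] //; case: c => [|[|[|c]]] // _ _ /=; rewrite ?addr0 ?add0r //.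
  rewrite /= subnK //.
  have -> : ((c - 2)%N == 0%N) = false by apply/eqP; lia.
  by rewrite andbF /= if_same add0r !addr0.
rewrite /= subnK // if_same.
have -> : ((a - 2)%N == 0%N) = false by apply/eqP; lia.
by rewrite /= !if_same !addr0.
Qed.

Definition h1' : R := mo 1 0 0 1 - mo 1 0 5 2 + mo 1 1 3 3.
Definition h2' : R := mo 1 1 2 0 + mo 1 2 0 1 - mo 1 0 4 4.
Definition h3' : R := mo 1 0 3 0 + mo 1 1 1 1 - mo 1 0 3 5.

Lemma h1_dec : (h1 K : R) = - mo 1 3 0 0 + mo 1 0 1 0 * h1'.
Proof.
have -> : (h1 K : R) = mo 1 0 1 1 + mo (-1) 3 0 0 + mo (-1) 0 6 2 + mo 1 1 4 3 by [].
rewrite /h1' !mulrDr !mulrN !mono_mono !mul1r !mono_neg /=; ring.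
Qed.

Lemma h2_dec : (h2 K : R) = mo 1 0 0 3 + mo 1 0 1 0 * h2'.
Proof.
have -> : (h2 K : R) = mo 1 0 0 3 + mo 1 1 3 0 + mo 1 2 1 1 + mo (-1) 0 5 4 by [].
rewrite /h2' !mulrDr !mulrN !mono_mono !mul1r !mono_neg /=; ring.
Qed.

Lemma h3_dec : (h3 K : R) = mo 1 2 0 2 + mo 1 0 1 0 * h3'.
Proof.
have -> : (h3 K : R) = mo 1 0 4 0 + mo 1 1 2 1 + mo 1 2 0 2 + mo (-1) 0 4 5 by [].
rewrite /h3' !mulrDr !mulrN !mono_mono !mul1r !mono_neg /=; ring.
Qed.

Definition D (g : R) : R :=
  (- Q1 g) * h1 K + Q2 g * h2 K + Q3 g * h3 K + Rm g.
Definition nxt (g : R) : R :=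
  shiftY g + Q1 g * h1' - Q2 g * h2' - Q3 g * h3'.

Lemma step (g : R) : g = D g + mo 1 0 1 0 * nxt g.
Proof.
rewrite {1}(split_y g) slice /D /nxt h1_dec h2_dec h3_dec; ring.
Qed.

End Div.


Section Conv.
Variable K : fieldType.
Local Notation R := (R3 K).

Definition Yk k : R := mo 1 0 k 0.
Definition ysum (S : nat -> R) : R := fun a b c => S b a 0%N c.

Lemma sumE I (r : seq I) (P : pred I) (G : I -> R) a b c :
  (\sum_(i <- r | P i) G i) a b c = \sum_(i <- r | P i) G i a b c.
Proof.
apply: (big_morph (fun f : R => f a b c)) => //.
Qed.

Lemma Yk0 : Yk 0 = 1. Proof. by []. Qed.
Lemma YkS k : Yk k * mo 1 0 1 0 = Yk k.+1.
Proof. by rewrite /Yk mono_mono mul1r addn1. Qed.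

Definition Fs (f : R) k : R := iter k (@nxt K) f.

Lemma partial (f : R) N :
  f = \sum_(k < N) Yk k * D (Fs f k) + Yk N * Fs f N.
Proof.
elim: N => [|N IH]; first by rewrite big_ord0 add0r Yk0 mul1r.
rewrite big_ord_recr /= -addrA -YkS.
rewrite {1}IH {1}(step (Fs f N)); ring.
Qed.

Lemma ps_agree (S : nat -> R) N a b c :
  (forall k a' b' c', b' != 0%N -> S k a' b' c' = 0) -> (b < N)%N ->
  (\sum_(k < N) Yk k * S k) a b c = ysum S a b c.
Proof.
move=> supp hb; rewrite sumE /ysum.
have -> : \sum_(k < N) (Yk k * S k) a b c = \sum_(k < N) (if (k : nat) == b then S b a 0%N c else 0).
  apply: eq_bigr => k _; rewrite /Yk mo_mul /= !subn0 mul1r.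
  case: eqP => [->|ne]; first by rewrite leqnn subnn.
  case: ifP => // h; apply: supp; apply/eqP; lia.
case: N hb => [|N] hb; first by [].
by rewrite sum_delta hb.
Qed.


Definition G1 (f : R) : R := ysum (fun k => - Q1 (Fs f k)).
Definition G2 (f : R) : R := ysum (fun k => Q2 (Fs f k)).
Definition G3 (f : R) : R := ysum (fun k => Q3 (Fs f k)).
Definition Rr (f : R) : R := ysum (fun k => Rm (Fs f k)).

Lemma decomp (f : R) : f = G1 f * h1 K + G2 f * h2 K + G3 f * h3 K + Rr f.
Proof.
apply: R_ext => a b c.
rewrite {1}(partial f b.+1).
have -> : \sum_(k < b.+1) Yk k * D (Fs f k) =
   (\sum_(k < b.+1) Yk k * (- Q1 (Fs f k))) * h1 K +
   (\sum_(k < b.+1) Yk k * Q2 (Fs f k)) * h2 K +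
   (\sum_(k < b.+1) Yk k * Q3 (Fs f k)) * h3 K +
   (\sum_(k < b.+1) Yk k * Rm (Fs f k)).
  rewrite !mulr_suml -!big_split /=; apply: eq_bigr => k _; rewrite /D; ring.
rewrite !addE [X in _ + X = _]mo_mul ltnn !andbF addr0 !mulE.
have A1 : forall (S : nat -> R), (forall k a' b' c', b' != 0%N -> S k a' b' c' = 0) ->
   forall (h : R), ps3mul (\sum_(k < b.+1) Yk k * S k) h a b c = ps3mul (ysum S) h a b c.
  move=> S supp h; apply: mul_box => i j l hi hj hl; split => //.
  by apply: ps_agree => //; rewrite ltnS.
rewrite (A1 (fun k => - Q1 (Fs f k))); last first.
  by move=> k a' b' c' /negbTE; rewrite oppE /Q1 => ->; rewrite oppr0.
rewrite (A1 (fun k => Q2 (Fs f k))); last first.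
  by move=> k a' b' c' /negbTE; rewrite /Q2 => ->.
rewrite (A1 (fun k => Q3 (Fs f k))); last first.
  by move=> k a' b' c' /negbTE; rewrite /Q3 => ->; rewrite !andbF.
rewrite (@ps_agree (fun k => Rm (Fs f k))) //.
by move=> k a' b' c' /negbTE; rewrite /Rm => ->.
Qed.
End Conv.


Section Ker.
Variable K : fieldType.
Local Notation R := (R3 K).

Definition stretch (A : nat -> K) : ps1 K := fun n => if (8 %| n)%N then A (n %/ 8)%N else 0.
Definition T (A : nat -> K) (e n : nat) : K := if (e <= n)%N then stretch A (n - e)%N else 0.
Definition Yser (A : nat -> K) : R := fun a b c => if (a == 0%N) && (c == 0%N) then A b else 0.

Lemma rho_Yser A : rho (Yser A) = stretch A.
Proof.
apply: ps1_ext => n; rewrite rhoE0 /Yser /stretch.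
have H : forall (a b c : nat), (if (a == 0%N) && (c == 0%N) then A b else 0) *
   (PX K ^+ a * PY K ^+ b * PZ K ^+ c)`_n =
   if a == 0%N then (if c == 0%N then A b * ('X^(8 * b))`_n else 0) else 0.
  move=> a b c; case: eqP => [->|]; case: eqP => [->|] //= *; rewrite ?mul0r //.
  by rewrite !expr0 mul1r mulr1 /PY -exprM.
under eq_bigr => a _ do under eq_bigr => b _ do under eq_bigr => c _ do rewrite H.
under eq_bigr => a _ do under eq_bigr => b _ do rewrite sum_if.
under eq_bigr => a _ do rewrite sum_if.
rewrite sum_delta /=.
under eq_bigr => b _ do rewrite sum_delta /=.
under eq_bigr => b _ do rewrite coefXn.
have Hb : forall b : nat, A b * ((n == 8 * b)%N)%:R =
  if b == (n %/ 8)%N then (if (8 %| n)%N then A b else 0) else 0.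
  move=> b; have [->|ne] := eqVneq b (n %/ 8)%N.
    case: ifP => h.
      by rewrite (_ : (8 * (n %/ 8))%N = n) ?eqxx ?mulr1 // mulnC divnK.
    have -> : (n == 8 * (n %/ 8))%N = false.
      by apply/negbTE/eqP => e; move: h; rewrite {1}e (dvdn_mulr _ (dvdnn 8)).
    by rewrite mulr0.
  have -> : (n == 8 * b)%N = false by apply/negbTE/eqP => e; move: ne; rewrite e mulKn // eqxx.
  by rewrite mulr0.
under eq_bigr => b _ do rewrite Hb.
rewrite sum_delta.
have -> : (n %/ 8 < n.+1)%N by rewrite ltnS leq_div.
by case: ifP => // h; rewrite inordK // ltnS leq_div.
Qed.


Lemma conv_add (p q : {poly K}) (S : ps1 K) n :
  ps1mul (toF1 (p + q)) S n = ps1mul (toF1 p) S n + ps1mul (toF1 q) S n.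
Proof. by rewrite /ps1mul /toF1 -big_split; apply: eq_bigr => i _; rewrite coefD mulrDl. Qed.

Lemma conv_X e (S : ps1 K) n : ps1mul (toF1 ('X^e : {poly K})) S n = if (e <= n)%N then S (n - e)%N else 0.
Proof.
rewrite /ps1mul /toF1.
have natr_if : forall (b : bool) (x : K), b%:R * x = if b then x else 0.
  by move=> [] x; rewrite ?mul1r ?mul0r.
under eq_bigr => i _ do rewrite coefXn natr_if.
by rewrite sum_delta ltnS; case: ifP => // h; rewrite inordK // ltnS.
Qed.


Definition Msupp (a c : nat) := [&& (a < 3)%N, (c < 3)%N & ~~ ((a == 2%N) && (c == 2%N))].

Lemma T_hitk (A : nat -> K) e n b : n = (b * 8 + e)%N -> T A e n = A b.
Proof.
move=> ->; rewrite /T /stretch leq_addl addnK dvdn_mull ?dvdnn //.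
by rewrite mulnK.
Qed.

Lemma T_miss (A : nat -> K) e b r : (r %% 8 == e %% 8)%N = false -> T A e (b * 8 + r) = 0.
Proof.
move=> h; rewrite /T /stretch; case: ifP => // he; case: ifP => // hd.
move: h; rewrite -(modnMDl b r 8) => /negbT/negP; case.
by rewrite eqn_mod_dvd.
Qed.

Lemma T_zero (A : nat -> K) e n : (forall b, A b = 0) -> T A e n = 0.
Proof. by move=> H; rewrite /T /stretch H !if_same. Qed.

Section R0.
Variable R0 : R.
Hypothesis supp : forall a b c, ~~ Msupp a c -> R0 a b c = 0.
Let A (a c : nat) : nat -> K := fun b => R0 a b c.

Lemma R0_dec : R0 =
  mo 1 0 0 0 * Yser (A 0 0) + mo 1 1 0 0 * Yser (A 1 0) + mo 1 2 0 0 * Yser (A 2 0) +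
  mo 1 0 0 1 * Yser (A 0 1) + mo 1 1 0 1 * Yser (A 1 1) + mo 1 2 0 1 * Yser (A 2 1) +
  mo 1 0 0 2 * Yser (A 0 2) + mo 1 1 0 2 * Yser (A 1 2).
Proof.
apply: R_ext => i j l; rewrite !addE !mo_mul /Yser /A.
case: (ltnP i 3) => hi; last first.
  rewrite supp; last by rewrite /Msupp; apply/negP => /and3P [h _ _]; lia.
  have H : forall a : nat, (a < 3)%N -> ((i - a)%N == 0%N) = false by move=> a ha; apply/eqP; lia.
  by rewrite !H //= !mulr0 !if_same !addr0.
case: (ltnP l 3) => hl; last first.
  rewrite supp; last by rewrite /Msupp; apply/negP => /and3P [_ h _]; lia.
  have H : forall a : nat, (a < 3)%N -> ((l - a)%N == 0%N) = false by move=> a ha; apply/eqP; lia.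
  by rewrite !H //= ?andbF /= !mulr0 ?if_same !addr0.
move: hi hl; case: i => [|[|[|i]]] //; case: l => [|[|[|l]]] // _ _ /=;
  rewrite ?mul1r ?mulr0 ?addr0 ?add0r ?subn0 //.
by rewrite supp.
Qed.


Lemma rhoR0 n : rho R0 n =
  T (A 0 0) 0 n + (T (A 1 0) 6 n + T (A 1 0) 31 n) +
  (T (A 2 0) 12 n + T (A 2 0) 37 n + T (A 2 0) 37 n + T (A 2 0) 62 n) +
  T (A 0 1) 10 n + (T (A 1 1) 16 n + T (A 1 1) 41 n) +
  (T (A 2 1) 22 n + T (A 2 1) 47 n + T (A 2 1) 47 n + T (A 2 1) 72 n) +
  T (A 0 2) 20 n + (T (A 1 2) 26 n + T (A 1 2) 51 n).
Proof.
rewrite {1}R0_dec !rhoD !rhoM /ps1add !rho_mono !rho_Yser !scale1r /T.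
have -> : PX K ^+ 0 * PY K ^+ 0 * PZ K ^+ 0 = 'X^0 by rewrite /PX /PY /PZ; ring.
have -> : PX K ^+ 1 * PY K ^+ 0 * PZ K ^+ 0 = 'X^6 + 'X^31 by rewrite /PX /PY /PZ; ring.
have -> : PX K ^+ 2 * PY K ^+ 0 * PZ K ^+ 0 = 'X^12 + 'X^37 + 'X^37 + 'X^62 by rewrite /PX /PY /PZ; ring.
have -> : PX K ^+ 0 * PY K ^+ 0 * PZ K ^+ 1 = 'X^10 by rewrite /PX /PY /PZ; ring.
have -> : PX K ^+ 1 * PY K ^+ 0 * PZ K ^+ 1 = 'X^16 + 'X^41 by rewrite /PX /PY /PZ; ring.
have -> : PX K ^+ 2 * PY K ^+ 0 * PZ K ^+ 1 = 'X^22 + 'X^47 + 'X^47 + 'X^72 by rewrite /PX /PY /PZ; ring.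
have -> : PX K ^+ 0 * PY K ^+ 0 * PZ K ^+ 2 = 'X^20 by rewrite /PX /PY /PZ; ring.
have -> : PX K ^+ 1 * PY K ^+ 0 * PZ K ^+ 2 = 'X^26 + 'X^51 by rewrite /PX /PY /PZ; ring.
by rewrite !conv_add !conv_X.
Qed.


Lemma R0_zero (two : (2%:R : K) != 0) (H : forall n, rho R0 n = 0) : R0 = 0.
Proof.
have HA11 : forall b, A 1 1 b = 0.
  move=> b; have := H (b * 8 + 41)%N; rewrite rhoR0 (@T_hitk _ _ _ b (erefl _)) !T_miss //.
  by rewrite !addr0 !add0r.
have HA12 : forall b, A 1 2 b = 0.
  move=> b; have := H (b * 8 + 51)%N; rewrite rhoR0 (@T_hitk _ _ _ b (erefl _)) !T_miss //.
  by rewrite !addr0 !add0r.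
have HA20 : forall b, A 2 0 b = 0.
  move=> b; have := H (b * 8 + 37)%N; rewrite rhoR0 (@T_hitk _ _ _ b (erefl _)) !T_miss //.
  rewrite !addr0 !add0r => /eqP; rewrite -mulr2n -mulr_natr mulf_eq0 (negbTE two) orbF.
  by move/eqP.
have HA01 : forall b, A 0 1 b = 0.
  move=> b; have := H (b * 8 + 10)%N; rewrite rhoR0 (@T_hitk _ _ _ b (erefl _)).
  rewrite !(T_zero _ _ HA12) !T_miss //.
  by rewrite !addr0 !add0r.
have HA02 : forall b, A 0 2 b = 0.
  move=> b; have := H (b * 8 + 20)%N; rewrite rhoR0 (@T_hitk _ _ _ b (erefl _)).
  rewrite !(T_zero _ _ HA20) !T_miss //.
  by rewrite !addr0 !add0r.
have HA21 : forall b, A 2 1 b = 0.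
  move=> b; have := H (b * 8 + 22)%N; have := H (b * 8 + 47)%N.
  rewrite !rhoR0 (@T_hitk _ 22 _ b (erefl _)) (@T_hitk _ 47 _ b (erefl _)).
  have t1 : T (A 1 0) 6 (b * 8 + 22) = A 1 0 (b + 2) by apply: T_hitk; lia.
  have t2 : T (A 1 0) 31 (b * 8 + 47) = A 1 0 (b + 2) by apply: T_hitk; lia.
  rewrite t1 t2 !(T_zero _ _ HA20) !T_miss //.
  rewrite !addr0 !add0r => E1 E2.
  by move: E1; rewrite addrA E2 add0r.
have HA10 : forall b, A 1 0 b = 0.
  move=> b; have := H (b * 8 + 6)%N; rewrite rhoR0 (@T_hitk _ _ _ b (erefl _)).
  rewrite !(T_zero _ _ HA20) !(T_zero _ _ HA21) !T_miss //.
  by rewrite !addr0 !add0r.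
have HA00 : forall b, A 0 0 b = 0.
  move=> b; have := H (b * 8 + 0)%N; rewrite rhoR0 (@T_hitk _ _ _ b (erefl _)).
  rewrite !(T_zero _ _ HA11) !(T_zero _ _ HA21) !T_miss //.
  by rewrite ?addr0 ?add0r.
apply: R_ext => a b c; rewrite zeroE.
case: (boolP (Msupp a c)) => h; last by rewrite supp.
move: h; rewrite /Msupp; case: a => [|[|[|a]]] //; case: c => [|[|[|c]]] //= _.
- exact: HA00.
- exact: HA01.
- exact: HA02.
- exact: HA10.
- exact: HA11.
- exact: HA12.
- exact: HA20.
- exact: HA21.
Qed.
End R0.
End Ker.


Section Main.
Variable K : fieldType.
Hypothesis hchar : 3%N \in [pchar K].
Local Notation R := (R3 K).

Lemma two_neq0 : (2%:R : K) != 0.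
Proof.
apply/eqP => h; have h3 : (3%:R : K) = 0 by exact: pcharf0 hchar.
have : (1 : K) = 0 by rewrite -(subrr (2%:R : K)) {1}h -h3 (natrD _ 2 1); ring.
by move/eqP; rewrite oner_eq0.
Qed.

Lemma ps1mul0 (s : ps1 K) n : ps1mul s (toF1 0) n = 0.
Proof. by rewrite /ps1mul big1 // => i _; rewrite /toF1 coef0 mulr0. Qed.

Lemma rho_comb (g1 g2 g3 : R) n :
  rho (ps3add (ps3add (ps3mul g1 (h1 K)) (ps3mul g2 (h2 K))) (ps3mul g3 (h3 K))) n = 0.
Proof.
rewrite !rhoD !rhoM rho_h1 // rho_h2 // rho_h3 // /ps1add !ps1mul0.
by rewrite !addr0.
Qed.

Lemma rhoDR (f g : R) n : rho (f + g) n = rho f n + rho g n.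
Proof. exact: (congr1 (fun s : ps1 K => s n) (rhoD f g)). Qed.

Lemma forward (f : R) : inP f -> exists g1 g2 g3 : ps3 K,
  f = ps3add (ps3add (ps3mul g1 (h1 K)) (ps3mul g2 (h2 K))) (ps3mul g3 (h3 K)).
Proof.
move=> Hf; exists (G1 f), (G2 f), (G3 f).
have Hd := decomp f.
have Hz : Rr f = 0.
  apply: R0_zero; first by move=> a b c; rewrite /Rr /ysum /Rm /Msupp /= => /negbTE ->.
    exact: two_neq0.
  move=> n; have := Hf n.
  rewrite {1}Hd.
  rewrite rhoDR.
  have -> : rho (G1 f * h1 K + G2 f * h2 K + G3 f * h3 K) n = 0 by apply: rho_comb.
  by rewrite add0r.
by rewrite {1}Hd Hz addr0.
Qed.


Definition comb (g1 g2 g3 : R) : R := g1 * h1 K + g2 * h2 K + g3 * h3 K.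

Lemma phi1 (g1 g2 g3 : R) : comb g1 g2 g3 0%N 1%N 1%N = g1 0%N 0%N 0%N.
Proof.
rewrite /comb !addE !mulE /ps3mul !big_ord_recr !big_ord0 /=.
rewrite /h1 /h2 /h3 /ps3add /mono3 /=; ring.
Qed.

Lemma phi2 (g1 g2 g3 : R) : comb g1 g2 g3 0%N 0%N 3%N = g2 0%N 0%N 0%N.
Proof.
rewrite /comb !addE !mulE /ps3mul !big_ord_recr !big_ord0 /=.
rewrite /h1 /h2 /h3 /ps3add /mono3 /=; ring.
Qed.

Lemma phi3 (g1 g2 g3 : R) : comb g1 g2 g3 0%N 4%N 0%N = g3 0%N 0%N 0%N.
Proof.
rewrite /comb !addE !mulE /ps3mul !big_ord_recr !big_ord0 /=.
rewrite /h1 /h2 /h3 /ps3add /mono3 /=; ring.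
Qed.

End Main.

Lemma mul000 (K : fieldType) (q g : R3 K) : (q * g) 0%N 0%N 0%N = q 0%N 0%N 0%N * g 0%N 0%N 0%N.
Proof. by rewrite mulE /ps3mul !big_ord1 /=. Qed.

Theorem mainTheorem7 (K : fieldType) (hchar : 3%N \in [pchar K]) :
  (forall f : ps3 K, inP f <->
     exists g1 g2 g3 : ps3 K,
       f = ps3add (ps3add (ps3mul g1 (h1 K)) (ps3mul g2 (h2 K))) (ps3mul g3 (h3 K)))
  /\
  ~ (exists f1 f2 : ps3 K, forall f : ps3 K, inP f <->
       exists g1 g2 : ps3 K, f = ps3add (ps3mul g1 f1) (ps3mul g2 f2)).
Proof.
have part1 : forall f : ps3 K, inP f <->
     exists g1 g2 g3 : ps3 K,
       f = ps3add (ps3add (ps3mul g1 (h1 K)) (ps3mul g2 (h2 K))) (ps3mul g3 (h3 K)).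
  move=> f; split; first exact: (forward hchar).
  by move=> [g1 [g2 [g3 ->]]] n; apply: (rho_comb hchar).
split=> //.
move=> [f1 [f2 Hgen]].
have inPc : forall g1 g2 g3 : R3 K, inP (comb g1 g2 g3).
  by move=> g1 g2 g3; apply/part1; exists g1, g2, g3.
have inPf1 : inP f1.
  apply/Hgen; exists (1 : R3 K), (0 : R3 K).
  by change ((f1 : R3 K) = (1 : R3 K) * (f1 : R3 K) + 0 * (f2 : R3 K)); ring.
have inPf2 : inP f2.
  apply/Hgen; exists (0 : R3 K), (1 : R3 K).
  by change ((f2 : R3 K) = (0 : R3 K) * (f1 : R3 K) + 1 * (f2 : R3 K)); ring.
have [a1 [a2 [a3 Ef1]]] := (part1 f1).1 inPf1.
have [b1 [b2 [b3 Ef2]]] := (part1 f2).1 inPf2.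
have Ef1' : (f1 : R3 K) = comb a1 a2 a3 by [].
have Ef2' : (f2 : R3 K) = comb b1 b2 b3 by [].
have key : forall g1 g2 g3 : R3 K, exists u v : K,
   [/\ g1 0%N 0%N 0%N = u * a1 0%N 0%N 0%N + v * b1 0%N 0%N 0%N,
       g2 0%N 0%N 0%N = u * a2 0%N 0%N 0%N + v * b2 0%N 0%N 0%N &
       g3 0%N 0%N 0%N = u * a3 0%N 0%N 0%N + v * b3 0%N 0%N 0%N].
  move=> g1 g2 g3.
  have [q1 [q2 Eq]] := (Hgen (comb g1 g2 g3)).1 (inPc g1 g2 g3).
  have Eq' : comb g1 g2 g3 = comb ((q1 : R3 K) * (a1 : R3 K) + (q2 : R3 K) * (b1 : R3 K))
     ((q1 : R3 K) * (a2 : R3 K) + (q2 : R3 K) * (b2 : R3 K)) ((q1 : R3 K) * (a3 : R3 K) + (q2 : R3 K) * (b3 : R3 K)).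
    have -> : comb g1 g2 g3 = (q1 : R3 K) * (f1 : R3 K) + (q2 : R3 K) * (f2 : R3 K) by [].
    by rewrite Ef1' Ef2' /comb; ring.
  exists (q1 0%N 0%N 0%N), (q2 0%N 0%N 0%N); split.
  - by rewrite -(phi1 g1 g2 g3) Eq' phi1 addE !mul000.
  - by rewrite -(phi2 g1 g2 g3) Eq' phi2 addE !mul000.
  - by rewrite -(phi3 g1 g2 g3) Eq' phi3 addE !mul000.
have one1 : (1 : R3 K) 0%N 0%N 0%N = 1 by [].
have zero1 : (0 : R3 K) 0%N 0%N 0%N = 0 by [].
have [u1 [v1 [E11 E12 E13]]] := key 1 0 0.
have [u2 [v2 [E21 E22 E23]]] := key 0 1 0.
have [u3 [v3 [E31 E32 E33]]] := key 0 0 1.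
rewrite ?one1 ?zero1 in E11 E12 E13 E21 E22 E23 E31 E32 E33.
set x1 := a1 0%N 0%N 0%N in E11 E21 E31.
set x2 := a2 0%N 0%N 0%N in E12 E22 E32.
set x3 := a3 0%N 0%N 0%N in E13 E23 E33.
set y1 := b1 0%N 0%N 0%N in E11 E21 E31.
set y2 := b2 0%N 0%N 0%N in E12 E22 E32.
set y3 := b3 0%N 0%N 0%N in E13 E23 E33.
have D : (u1 * x1 + v1 * y1) * ((u2 * x2 + v2 * y2) * (u3 * x3 + v3 * y3) - (u2 * x3 + v2 * y3) * (u3 * x2 + v3 * y2))
  - (u1 * x2 + v1 * y2) * ((u2 * x1 + v2 * y1) * (u3 * x3 + v3 * y3) - (u2 * x3 + v2 * y3) * (u3 * x1 + v3 * y1))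
  + (u1 * x3 + v1 * y3) * ((u2 * x1 + v2 * y1) * (u3 * x2 + v3 * y2) - (u2 * x2 + v2 * y2) * (u3 * x1 + v3 * y1)) = 0.
  ring.
rewrite -E11 -E12 -E13 -E21 -E22 -E23 -E31 -E32 -E33 in D.
have E1 : (1 * (1 * 1 - 0 * 0) - 0 * (0 * 1 - 0 * 0) + 0 * (0 * 0 - 1 * 0) : K) = 1 by ring.
by move: D; rewrite E1; move/eqP; rewrite oner_eq0.
Qed.
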